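(* Fix constants $B>0$, $1\le\Gamma\le 3$, $0<\kappa\le 1$, and fixed Riemann data $\varrho_l>0$, $\varrho_r>0$, $\upsilon_l,\upsilon_r\ge 0$ with $\upsilon_r\le \upsilon_l-\frac{B}{\varrho_l^{\kappa}}$. For parameters $a>0$, $A>0$ (with $a<1/\max(\varrho_l,\varrho_r)$), let $p(\varrho)=A\left(\frac{\varrho}{1-a\varrho}\right)^{\Gamma}-\frac{B}{\varrho^{\kappa}}$, $p_l=p(\varrho_l)$, and let $\varrho_*=\varrho_*(a,A)\in(\varrho_l,1/a)$ be the intermediate density determined by $\upsilon_r=-p(\varrho_* )+\upsilon_l+p_l$. Then $\lim_{a,A\to 0}\varrho_*=+\infty$.
   Context: This concerns the Aw–Rascle type system $\varrho_t+(\varrho\upsilon)_x=0$, $(\varrho(\upsilon+p))_t+(\varrho\upsilon(\upsilon+p))_x=0$ with the pressure $p$ above, and Riemann initial data $(\varrho,\upsilon)(x,0)=(\varrho_l,\upsilon_l)$ for $x<0$, $(\varrho_r,\upsilon_r)$ for $x>0$. When $\upsilon_r<\upsilon_l$, the Riemann solution consists of a 1-shock $S$ from $(\varrho_l,\upsilon_l)$ to an intermediate state $(\varrho_*,\upsilon_* )$ with $\varrho_*>\varrho_l$ and $\upsilon_*+p(\varrho_* )=\upsilon_l+p_l$, followed by a contact discontinuity $J$ from $(\varrho_*,\upsilon_* )$ to $(\varrho_r,\upsilon_r)$ with $\upsilon_*=\upsilon_r$. The limit $a,A\to0$ is taken with $B,\Gamma,\kappa$ and the Riemann data fixed. *)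

(* Defs.v *)
From Stdlib Require Import Reals.
Open Scope R_scope.

Definition pres (a A B Gam kap rho : R) : R :=
  A * Rpower (rho / (1 - a * rho)) Gam - B / Rpower rho kap.

(* Main.v *)
Require Import Defs.
From Stdlib Require Import Reals Lra.
Open Scope R_scope.

Lemma Rpow_pos x y : 0 < Rpower x y.
Proof. unfold Rpower; apply exp_pos. Qed.

Theorem lemma3p1 (B Gam kap rl rr ul ur : R)
  (hB : 0 < B) (hG : 1 <= Gam <= 3) (hk : 0 < kap <= 1)
  (hrl : 0 < rl) (hrr : 0 < rr) (hul : 0 <= ul) (hur : 0 <= ur)
  (hdata : ur <= ul - B / Rpower rl kap) :
  forall M : R, exists delta : R, 0 < delta /\
    forall a A rs : R,
      0 < a < delta -> 0 < A < delta ->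
      a < 1 / Rmax rl rr ->
      rl < rs < 1 / a ->
      ur = - pres a A B Gam kap rs + ul + pres a A B Gam kap rl ->
      M < rs.
Proof.
  intro M.
  set (Nn := Rmax M 1).
  assert (HN1 : 1 <= Nn) by apply Rmax_r.
  assert (HMN : M <= Nn) by apply Rmax_l.
  set (K := Rpower (2 * Nn) Gam).
  set (L := Rpower Nn kap).
  assert (HK : 0 < K) by apply Rpow_pos.
  assert (HL : 0 < L) by apply Rpow_pos.
  exists (Rmin (1 / (2 * Nn)) (B / (L * K))).
  split.
  { apply Rmin_pos; apply Rdiv_lt_0_compat; try lra; apply Rmult_lt_0_compat; lra. }
  intros a A rs Ha HA Har Hrs Heq.
  destruct (Rlt_le_dec M rs) as [h|h]; [exact h|exfalso].
  assert (HrsN : rs <= Nn) by lra.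
  assert (Ha1 : a < 1 / (2 * Nn)) by (pose proof (Rmin_l (1 / (2 * Nn)) (B / (L * K))); lra).
  assert (HA1 : A < B / (L * K)) by (pose proof (Rmin_r (1 / (2 * Nn)) (B / (L * K))); lra).
  assert (HaN : a * Nn < 1/2).
  { apply (Rmult_lt_compat_r Nn) in Ha1; [|lra].
    replace (1 / (2 * Nn) * Nn) with (1/2) in Ha1 by (field; lra). lra. }
  assert (Hars : a * rs <= a * Nn) by (apply Rmult_le_compat_l; lra).
  set (Xs := rs / (1 - a * rs)).
  assert (HXs0 : 0 < Xs) by (unfold Xs; apply Rdiv_lt_0_compat; lra).
  assert (HXs : Xs <= 2 * Nn).
  { unfold Xs. apply Rmult_le_reg_r with (1 - a * rs); [lra|].
    unfold Rdiv; rewrite Rmult_assoc, Rinv_l by lra. nra. }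
  assert (HXK : Rpower Xs Gam <= K) by (apply Rle_Rpower_l; lra).
  assert (HRL : Rpower rs kap <= L) by (apply Rle_Rpower_l; lra).
  assert (Hrk : 0 < Rpower rs kap) by apply Rpow_pos.
  assert (Hlk : 0 < Rpower rl kap) by apply Rpow_pos.
  assert (Hl : 0 < Rpower (rl / (1 - a * rl)) Gam) by apply Rpow_pos.
  unfold pres in Heq. fold Xs in Heq.
  assert (H1 : B / Rpower rs kap <= A * Rpower Xs Gam).
  { assert (0 <= A * Rpower (rl / (1 - a * rl)) Gam) by (apply Rmult_le_pos; lra). lra. }
  assert (H2 : B / L <= B / Rpower rs kap).
  { unfold Rdiv; apply Rmult_le_compat_l; [lra|]. apply Rinv_le_contravar; lra. }
  assert (H3 : A * Rpower Xs Gam <= A * K) by (apply Rmult_le_compat_l; lra).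
  assert (H4 : A * K < B / L).
  { apply (Rmult_lt_compat_r K) in HA1; [|lra].
    replace (B / (L * K) * K) with (B / L) in HA1 by (field; lra). lra. }
  lra.
Qed.
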